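(* Let $p\in(0,1/2)$, $\varepsilon>0$, and let $\mathcal{C}\subseteq\mathbb{F}_2^n$ be a fixed linear code with $T_{\mathcal{C}}<1$ (so $S_{\mathcal{C}}<2$). Then $$\Pr_{b\sim\mathbb{F}_2^n}\left[S_{\mathcal{C}+\{0,b\}}>1+2T_{\mathcal{C}}+T_{\mathcal{C}}^{1.5}\right]<T_{\mathcal{C}}^{0.5},$$ where $b$ is uniform in $\mathbb{F}_2^n$.
   Context: $L_{\mathcal{C}}(x)=|\{c\in\mathcal{C}:\Delta(x,c)\le pn\}|$ with $\Delta$ Hamming distance; $A_{\mathcal{C}}(x)=2^{\frac{\varepsilon n L_{\mathcal{C}}(x)}{1+\varepsilon}}$, $S_{\mathcal{C}}=\mathbb{E}_{x\sim\mathbb{F}_2^n}[A_{\mathcal{C}}(x)]$ ($x$ uniform), and $T_{\mathcal{C}}=S_{\mathcal{C}}-1$. $\mathcal{C}+\{0,b\}=\mathcal{C}\cup(\mathcal{C}+b)$. *)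

(* Defs.v *)
From mathcomp Require Import all_boot all_order all_algebra.
From Stdlib Require Import Reals.

Set Implicit Arguments.
Unset Strict Implicit.
Unset Printing Implicit Defensive.

Import GRing.Theory.

Notation vec n := 'rV['F_2]_n.

Definition hamming (n : nat) (x y : vec n) : nat :=
  #|[set i : 'I_n | x ord0 i != y ord0 i]|.

(* linear code over F_2: contains 0 and closed under addition
   (scalar multiplication by F_2 = {0,1} is then automatic) *)
Definition linear_code (n : nat) (C : {set vec n}) : Prop :=
  (GRing.zero \in C) /\ (forall x y, x \in C -> y \in C -> GRing.add x y \in C).

(* C + {0,b} = C ∪ (C + b) *)
Definition code_add_b (n : nat) (C : {set vec n}) (b : vec n) : {set vec n} :=
  C :|: [set GRing.add c b | c in C].

Local Open Scope R_scope.

Definition Lc (p : R) (n : nat) (C : {set vec n}) (x : vec n) : nat :=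
  #|[set c in C | if Rle_dec (INR (hamming x c)) (p * INR n) then true else false]|.

Definition Ac (p eps : R) (n : nat) (C : {set vec n}) (x : vec n) : R :=
  Rpower 2 (eps * INR n * INR (Lc p C x) / (1 + eps)).

Definition Sc (p eps : R) (n : nat) (C : {set vec n}) : R :=
  (\big[Rplus/0]_(x : vec n) Ac p eps C x) / (2 ^ n).

Definition Tc (p eps : R) (n : nat) (C : {set vec n}) : R := Sc p eps C - 1.

Definition prob_b (n : nat) (P : vec n -> bool) : R :=
  INR #|[set b : vec n | P b]| / (2 ^ n).

Definition Rltb (x y : R) : bool := if Rlt_dec x y then true else false.

(* Main.v *)
Require Import Defs.
From mathcomp Require Import all_boot all_order all_algebra.
From Stdlib Require Import Reals Lra.
From mathcomp Require Import Rstruct.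
Import Defs.
Import GRing.Theory.

Local Open Scope R_scope.

Lemma F2 (a b c : 'F_2) : (a == GRing.add c b) = (GRing.add a b == c).
Proof. by move: a b c; do 3!case=> [[|[|[]]] ?] //=. Qed.

Lemma iterR k c : iter k (Rplus c) 0 = INR k * c.
Proof. elim: k => [|k IH]; first (simpl; lra). rewrite iterS IH S_INR; lra. Qed.

Lemma INR2 n : INR (expn 2 n) = pow 2 n.
Proof. elim: n => [|n IH] //=. rewrite expnS mult_INR IH /=. lra. Qed.

Lemma sum1 n : \big[Rplus/0]_(x : vec n) 1 = 2 ^ n.
Proof.
rewrite big_const_seq count_predT /index_enum; rewrite -?enumT -cardT.
by rewrite card_mx card_Fp // iterR mul1n INR2; lra.
Qed.

Lemma ham_shift n (x c b : vec n) :
  hamming x (GRing.add c b) = hamming (GRing.add x b) c.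
Proof. rewrite /hamming; apply: eq_card => i; rewrite !inE !mxE F2 //. Qed.

Lemma card_add_le n (C : {set vec n}) b (Q : vec n -> vec n -> bool) x :
  (forall x c, Q x (GRing.add c b) = Q (GRing.add x b) c) ->
  leq #|[set c in code_add_b C b | Q x c]|
      (addn #|[set c in C | Q x c]| #|[set c in C | Q (GRing.add x b) c]|).
Proof.
move=> hQ; rewrite /code_add_b.
have -> : [set c in C :|: [set GRing.add c b | c in C] | Q x c] =
   [set c in C | Q x c] :|: [set c in [set GRing.add c b | c in C] | Q x c].
  by apply/setP => y; rewrite !inE andb_orl.
apply: leq_trans (leq_card_setU _ _) _.
rewrite leq_add2l.
apply: leq_trans (leq_imset_card (fun c => GRing.add c b) [set c in C | Q (GRing.add x b) c]).
apply: subset_leq_card; apply/subsetP => y; rewrite inE => /andP[/imsetP[c cC ->] Py].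
apply/imsetP; exists c => //; rewrite inE cC /=.
by rewrite -hQ.
Qed.

Lemma Lc_add n p (C : {set vec n}) b x :
  leq (Lc p (code_add_b C b) x) (addn (Lc p C x) (Lc p C (GRing.add x b))).
Proof.
apply: (@card_add_le n C b
  (fun y c => if Rle_dec (INR (hamming y c)) (p * INR n) then true else false) x).
by move=> y c; rewrite ham_shift.
Qed.

Lemma Ac_ge1 p eps n (C : {set vec n}) x : 0 < eps -> 1 <= Ac p eps C x.
Proof.
move=> he; rewrite /Ac -{1}(Rpower_O 2); last lra.
apply: Rle_Rpower; first lra.
have h1 := pos_INR n; have h2 := pos_INR (Lc p C x).
have h3 : 0 < / (1 + eps) by apply: Rinv_0_lt_compat; lra.
rewrite /Rdiv; apply: Rmult_le_pos; [apply: Rmult_le_pos; [apply: Rmult_le_pos|] |]; lra.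
Qed.

Lemma Ac_mul p eps n (C : {set vec n}) b x : 0 < eps ->
  Ac p eps (code_add_b C b) x <= Ac p eps C x * Ac p eps C (GRing.add x b).
Proof.
move=> he; rewrite /Ac -Rpower_plus; apply: Rle_Rpower; first lra.
have /leP/le_INR := Lc_add n p C b x; rewrite plus_INR => H.
set k := eps * INR n / (1 + eps).
have hk : 0 <= k.
  rewrite /k; have h1 := pos_INR n.
  have h3 : 0 < / (1 + eps) by apply: Rinv_0_lt_compat; lra.
  rewrite /Rdiv; apply: Rmult_le_pos; [apply: Rmult_le_pos |]; lra.
have e : forall L, eps * INR n * L / (1 + eps) = k * L.
  by move=> L; rewrite /k /Rdiv; ring.
rewrite !e; have := Rmult_le_compat_l _ _ _ hk H; lra.
Qed.

Lemma sum_le (I : finType) (F1 F2 : I -> R) :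
  (forall i, F1 i <= F2 i) -> \big[Rplus/0]_i F1 i <= \big[Rplus/0]_i F2 i.
Proof.
move=> H; apply: (big_ind2 (fun a b => a <= b)); [lra | move=> *; lra | move=> i _; exact: H].
Qed.

Lemma sum_lt (I : finType) (F1 F2 : I -> R) i0 :
  (forall i, F1 i <= F2 i) -> F1 i0 < F2 i0 ->
  \big[Rplus/0]_i F1 i < \big[Rplus/0]_i F2 i.
Proof.
move=> H H0; rewrite (bigD1 i0) //= [X in _ < X](bigD1 i0) //=.
apply: Rplus_lt_le_compat => //.
apply: (big_ind2 (fun a b => a <= b)); [lra | move=> *; lra | move=> i _; exact: H].
Qed.

Local Close Scope R_scope.

Theorem lemma3 (n : nat) (p eps : R) (C : {set vec n}) :
  (1 <= n)%N ->
  (0 < p)%R -> (p < 1 / 2)%R -> (0 < eps)%R ->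
  linear_code C ->
  (Tc p eps C < 1)%R ->
  (prob_b (fun b : vec n =>
     Rltb (1 + 2 * Tc p eps C + Rpower (Tc p eps C) (3 / 2))%R
          (Sc p eps (code_add_b C b)))
   < Rpower (Tc p eps C) (1 / 2))%R.
Proof.
Local Open Scope R_scope.
move=> hn hp hp2 he [C0 _] _.
set T := Tc p eps C.
set A := Ac p eps C.
set N := 2 ^ n.
set SA := \big[Rplus/0]_(x : vec n) A x.
have hN : 0 < N by apply: pow_lt; lra.
have hA : forall x, 1 <= A x by move=> x; apply: Ac_ge1.
have hSA : SA = N * (T + 1) by rewrite /T /Tc /Sc -/A -/SA -/N; field; lra.
have hA0 : 1 < A (GRing.zero : vec n).
  rewrite /A /Ac -{1}(Rpower_O 2); last lra.
  apply: Rpower_lt; first lra.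
  have hL : (0 < Lc p C (GRing.zero : vec n))%nat.
    rewrite /Lc card_gt0; apply/set0Pn; exists (GRing.zero : vec n); rewrite inE C0 /=.
    have -> : hamming (GRing.zero : vec n) (GRing.zero : vec n) = 0%nat.
      by apply/eqP; rewrite /hamming cards_eq0; apply/eqP/setP => i; rewrite !inE eqxx.
    case: Rle_dec => // H; exfalso; apply: H; simpl.
    apply: Rmult_le_pos; [lra | apply: pos_INR].
  have h1 : 0 < INR n by apply: lt_0_INR; apply/ltP.
  have h2 : 0 < INR (Lc p C (GRing.zero : vec n)) by apply: lt_0_INR; apply/ltP.
  have h3 : 0 < / (1 + eps) by apply: Rinv_0_lt_compat; lra.
  rewrite /Rdiv; apply: Rmult_lt_0_compat; [apply: Rmult_lt_0_compat; [apply: Rmult_lt_0_compat|] |]; lra.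
have hSAN : N < SA.
  rewrite /N -sum1 /SA; apply: (@sum_lt _ (fun _ => 1) A (GRing.zero : vec n)) => //.
have hT : 0 < T.
  have : N * 1 < N * (T + 1) by lra.
  move/(Rmult_lt_reg_l _ _ _ hN); lra.
set F := fun b : vec n => \big[Rplus/0]_(x : vec n) (A x * A (GRing.add x b)).
have hshift : forall x, \big[Rplus/0]_(b : vec n) A (GRing.add x b) = SA.
  by move=> x; rewrite /SA [RHS](reindex_inj (addrI x)).
have hshift2 : forall b, \big[Rplus/0]_(x : vec n) A (GRing.add x b) = SA.
  by move=> b; rewrite /SA [RHS](reindex_inj (addIr b)).
have hsumF : \big[Rplus/0]_(b : vec n) F b = SA * SA.
  rewrite /F exchange_big /=.
  under eq_bigr => x _ do rewrite -big_distrr /= hshift.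
  by rewrite -big_distrl.
have hFlow : forall b, SA + SA <= F b + N.
  move=> b.
  have -> : SA + SA = \big[Rplus/0]_(x : vec n) (A x + A (GRing.add x b)).
    rewrite big_split; change (SA + SA = SA + \big[Rplus/0]_(x : vec n) A (GRing.add x b)).
    by rewrite (hshift2 b).
  rewrite /N -sum1 /F -big_split /=.
  apply: sum_le => x.
  match goal with |- ?a + A ?y <= _ => have h1 := hA x; have h2 := hA y;
    have h3 : 0 <= (A x - 1) * (A y - 1) by apply: Rmult_le_pos; lra end.
  lra.
have hS' : forall b, Sc p eps (code_add_b C b) <= F b / N.
  move=> b; rewrite /Sc -/N /Rdiv; apply: Rmult_le_compat_r.
    by apply: Rlt_le; apply: Rinv_0_lt_compat.
  by apply: sum_le => x; apply: Ac_mul.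
(* Markov *)
set t := Rpower T (3 / 2).
set u := Rpower T (1 / 2).
have ht : 0 < t by rewrite /t /Rpower; apply: exp_pos.
have hu : 0 < u by rewrite /u /Rpower; apply: exp_pos.
have hut : u * t = T * T.
  rewrite /u /t -Rpower_plus.
  have -> : 1 / 2 + 3 / 2 = INR 2 by simpl; lra.
  by rewrite Rpower_pow //=; ring.
rewrite /prob_b -/N -/T -/t -/u.
set E := [set b : vec n | _].
case: (boolP (#|E| == 0)%nat) => [/eqP -> | hE].
  by simpl; rewrite /Rdiv Rmult_0_l.
have [b0 hb0] : exists b0, b0 \in E.
  by apply/set0Pn; rewrite -card_gt0 lt0n.
set H := fun b : vec n => (if b \in E then t else 0) + (1 + 2 * T).
have hH : forall b, H b <= F b / N.
  move=> b; rewrite /H; case: ifP => [|_].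
    rewrite in_set /Rltb; case: Rlt_dec => // h _; have := hS' b; lra.
  have := hFlow b; rewrite hSA => h.
  have -> : F b / N = F b * / N by [].
  have hinv : 0 < / N by apply: Rinv_0_lt_compat.
  have : (1 + 2 * T) * N <= F b by lra.
  move=> h2; have := Rmult_le_compat_r (/ N) _ _ (Rlt_le _ _ hinv) h2.
  by rewrite Rmult_assoc Rinv_r; lra.
have hH0 : H b0 < F b0 / N.
  rewrite /H hb0; move: hb0; rewrite in_set /Rltb; case: Rlt_dec => // h _.
  have := hS' b0; lra.
have hlt := @sum_lt _ _ _ _ hH hH0.
rewrite /H big_split /= -big_mkcond big_const iterR in hlt.
have e1 : \big[Rplus/0]_(b : vec n) (1 + 2 * T) = N * (1 + 2 * T).
  rewrite /N -sum1 big_distrl /=; apply: eq_bigr => *; ring.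
have e2 : \big[Rplus/0]_(b : vec n) (F b / N) = SA * SA / N.
  rewrite /Rdiv -big_distrl /= hsumF //.
rewrite e1 e2 hSA in hlt.
have key : INR #|E| * t < N * (T * T).
  have : N * (T + 1) * (N * (T + 1)) / N = N * (T + 1) * (T + 1) by field; lra.
  move=> h; rewrite h in hlt; lra.
have hEpos := pos_INR #|E|.
apply: (Rmult_lt_reg_r N) => //.
rewrite /Rdiv Rmult_assoc Rinv_l; last lra.
rewrite Rmult_1_r.
apply: (Rmult_lt_reg_r t) => //.
rewrite Rmult_assoc [N * t]Rmult_comm -Rmult_assoc hut.
lra.
Qed.
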